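(* Let $\Psi$ be a family of real-valued functions with $\sup_{f\in\Psi}\mathrm{Var}[f(X)]\le\sigma^2$ for some $\sigma^2>0$, and let $\mathscr{X}=\{X^f:=m_f-\hat\mu_f:\ f\in\Psi\}$. There exist constants $C_1,C_2,C_3,C_4>0$ depending only on $\sigma^2$ such that the following holds. Let $\varepsilon\in(0,1)$ and suppose that (i) $\mathscr{X}$ is an exponential class whose bracketing covering numbers satisfy $N(\delta)\le C\exp(M\delta^{-2})$ for all $0<\delta\le n$, for some constants $C,M>0$; and (ii) writing $a=\frac{n^2\varepsilon}{C_2}\wedge\frac{n}{4}$, $$\frac{n^{3/2}\varepsilon^2}{C_1}\ \ge\ \Big\{\sqrt{M}\,\log\!\Big(\frac{n}{a}\Big)+\sqrt{\log C}\,(n-a)\,\mathbf 1_{\{C>1\}}\Big\}\vee n^{1/2}.$$ Then $$\mathbb{P}\Big(\sup_{f\in\Psi}|m_f-\hat\mu_f|\ge n^2\varepsilon\Big)\le C_3\exp\Big(-\frac{n\varepsilon^2}{C_4}\Big),$$ where $\mathbb P$ is understood as outer probability if $\Psi$ is uncountable.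
   Context: $(X_i)_{i=1}^n$ are i.i.d. real random variables on $(\Omega,\mathcal F,\mathbb P)$, and $X$ is independent of them with the same distribution. For a real function $f$, $m_f=\mathbb E f(X)$. Let $\phi:\mathbb R\to\mathbb R$ be non-decreasing, differentiable, with $-\log(1-x+x^2/2)\le\phi(x)\le\log(1+x+x^2/2)$ for all $x$. For a parameter $\alpha>0$, set $\hat r_f(\mu)=\frac{1}{n\alpha}\sum_{i=1}^n\phi(\alpha(f(X_i)-\mu))$; Catoni's estimator $\hat\mu_f$ is a value (chosen arbitrarily if not unique) with $\hat r_f(\hat\mu_f)=0$. Standing assumption (used in the paper as a consequence of Catoni's deviation bound with suitable $\alpha$): for every $f\in\Psi$ and every $x>0$, $\mathbb P(|m_f-\hat\mu_f|\ge x)\le 2\exp\big(-\frac{nx^2}{2(\sigma^2+x^2)}\big)$. Distance: for $X^f,X^{f'}\in\mathscr X$, $d(X^f,X^{f'})=\|X^f-X^{f'}\|$, where $\|\cdot\|$ is the essential supremum norm on $\Omega$ (assumed finite on $\mathscr X$). Bracketing entropy: for $\delta>0$, $N(\delta)$ is the smallest $m$ such that there are pairs $[D_j^L,D_j^U]\in\mathscr X\times\mathscr X$, $j=1,\dots,m$, with the property that for each element $D\in\mathscr X$ there is $j$ with $D_j^L\le D\le D_j^U$ and $d(D_j^L,D_j^U)\le\delta$. $H(\delta)=\log N(\delta)$. $\mathscr X$ is called an exponential class if $N(\kappa)\le A\exp(B\kappa^{-r})$ for all $0<\kappa\le n$, for some constants $A,B,r>0$. *)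

(* Defs.v *)
From HB Require Import structures.
From mathcomp Require Import all_boot all_order all_algebra.
From mathcomp Require Import all_classical all_reals all_analysis ess_sup_inf.
Set Implicit Arguments. Unset Strict Implicit. Unset Printing Implicit Defensive.
Import Order.TTheory GRing.Theory Num.Theory.
Import numFieldNormedType.Exports.
Local Open Scope classical_set_scope.
Local Open Scope ring_scope.

Section defs.
Context {d : measure_display} {T : measurableType d} {R : realType}.
Variable P : probability T R.

Definition outer_prob (A : set T) : \bar R :=
  ereal_inf [set P B | B in [set B | measurable B /\ A `<=` B]].

Definition mutually_independent (I : finType) (Y : I -> T -> R) : Prop :=
  forall (J : {set I}) (B : I -> set R), (forall i, measurable (B i)) ->
    P (\bigcap_(i in [set i | i \in J]) (Y i @^-1` B i)) =
    (\prod_(i in J) P (Y i @^-1` B i))%E.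

Definition same_distribution (Y Z : T -> R) : Prop :=
  forall B : set R, measurable B -> P (Y @^-1` B) = P (Z @^-1` B).

Definition mean_of (X : T -> R) (f : R -> R) : R := fine ('E_P[f \o X])%E.

Definition catoni_r (phi : R -> R) (alpha : R) (n : nat) (Xs : nat -> T -> R)
  (f : R -> R) (w : T) (mu : R) : R :=
  (n%:R * alpha)^-1 * \sum_(i < n) phi (alpha * (f (Xs i w) - mu)).

Definition ess_dist (U V : T -> R) : \bar R :=
  ess_sup P (fun w => (`|U w - V w|)%:E).

Definition bracketing_number (S : set (T -> R)) (delta : R) : \bar R :=
  ereal_inf [set (m%:R)%:E | m in
    [set m : nat | exists L U : nat -> T -> R,
       (forall j, (j < m)%N -> [/\ S (L j), S (U j) & (ess_dist (L j) (U j) <= delta%:E)%E]) /\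
       (forall D, S D -> exists2 j, (j < m)%N & forall w, L j w <= D w <= U j w)]].
End defs.

(* Main.v *)
Require Import Defs.
From HB Require Import structures.
From mathcomp Require Import all_boot all_order all_algebra.
From mathcomp Require Import all_classical all_reals all_analysis ess_sup_inf.
From mathcomp Require Import measurable_realfun ring lra.
Import Order.TTheory GRing.Theory Num.Theory.
Import numFieldNormedType.Exports.
Local Open Scope classical_set_scope.
Local Open Scope ring_scope.

Lemma bigU_bound d (T : measurableType d) (R : realType) (P : probability T R)
  (F : nat -> set T) (b : R) k :
  (forall j, (j < k)%N -> measurable (F j) /\ (P (F j) <= b%:E)%E) ->
  measurable (\big[setU/set0]_(0 <= j < k) F j) /\
  (P (\big[setU/set0]_(0 <= j < k) F j) <= (k%:R * b)%:E)%E.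
Proof.
elim: k => [|k IH] H.
  by rewrite big_geq // measure0 mul0r lexx.
rewrite big_nat_recr //=.
have [m1 l1] := IH (fun j hj => H j (ltnW hj)).
have [m2 l2] := H k (ltnSn k).
split; first exact: measurableU.
apply: le_trans (measureU2 _ m1 m2) _.
by rewrite -[k.+1]addn1 natrD mulrDl mul1r EFinD leeD.
Qed.

Fixpoint maxupto {R : realType} (F : nat -> R) k : R :=
  if k is k'.+1 then Num.max (maxupto F k') (F k') else 0.

Lemma bigmax_ex (R : realType) (F : nat -> R) x k :
  0 < x -> x <= maxupto F k -> exists2 j, (j < k)%N & x <= F j.
Proof.
move=> hx; elim: k => [|k IH] /=.
  by move=> h; have := lt_le_trans hx h; rewrite ltxx.
rewrite le_max => /orP[/IH [j jk h]|h].
  by exists j => //; apply: ltnW.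
by exists k.
Qed.

Lemma le_bigmax_nat (R : realType) (F : nat -> R) j k :
  (j < k)%N -> F j <= maxupto F k.
Proof.
elim: k => [//|k IH] jk /=.
rewrite le_max; move: jk; rewrite ltnS leq_eqVlt => /orP[/eqP->|jk].
  by rewrite lexx orbT.
by rewrite IH.
Qed.

Lemma in_bigU T (F : nat -> set T) j k w :
  (j < k)%N -> F j w -> (\big[setU/set0]_(0 <= i < k) F i) w.
Proof.
elim: k => [//|k IH] jk Fw.
rewrite big_nat_recr //=; move: jk; rewrite ltnS leq_eqVlt => /orP[/eqP<-|jk].
  by right.
by left; apply: IH.
Qed.

Theorem theorem1 (R : realType) (sigma2 : R) : 0 < sigma2 ->
  exists C1 C2 C3 C4 : R, [/\ 0 < C1, 0 < C2, 0 < C3, 0 < C4 &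
  forall (d : measure_display) (T : measurableType d) (P : probability T R)
    (n : nat) (Xs : nat -> T -> R) (X : T -> R)
    (phi : R -> R) (alpha : R) (Psi : set (R -> R)) (muhat : (R -> R) -> T -> R)
    (eps C M : R),
  (* sample: X, X_1..X_n i.i.d. real random variables *)
  (0 < n)%N ->
  measurable_fun setT X ->
  (forall i, (i < n)%N -> measurable_fun setT (Xs i)) ->
  (forall i, (i < n)%N -> same_distribution P (Xs i) X) ->
  mutually_independent P
    (fun o : option 'I_n => match o with None => X | Some i => Xs i end) ->
  (* Catoni's influence function and parameter *)
  {homo phi : x y / x <= y} ->
  (forall x, derivable phi x 1) ->
  (forall x, - ln (1 - x + x ^+ 2 / 2) <= phi x <= ln (1 + x + x ^+ 2 / 2)) ->
  0 < alpha ->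
  (* the class Psi, with sup Var f(X) <= sigma2 *)
  (forall f, Psi f -> measurable_fun setT f) ->
  (forall f, Psi f -> (f \o X) \in Lfun P 2%:E) ->
  (forall f, Psi f -> ('V_P[f \o X] <= sigma2%:E)%E) ->
  (* Catoni's estimators: a root of r_f, measurable *)
  (forall f, Psi f -> forall w, catoni_r phi alpha n Xs f w (muhat f w) = 0) ->
  (forall f, Psi f -> measurable_fun setT (muhat f)) ->
  (* standing deviation assumption *)
  (forall f, Psi f -> forall x, 0 < x ->
     (P [set w | (x <= `|mean_of P X f - muhat f w|)%R]
       <= (2 * expR (- (n%:R * x ^+ 2) / (2 * (sigma2 + x ^+ 2))))%:E)%E) ->
  (* the essential supremum norm is finite on the class *)
  (forall f, Psi f ->
     (ess_sup P (fun w => (`|mean_of P X f - muhat f w|)%:E) < +oo)%E) ->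
  0 < eps < 1 ->
  (* (i) bracketing bound *)
  0 < C -> 0 < M ->
  (forall delta, 0 < delta <= n%:R ->
     (bracketing_number P
        [set Xf | exists2 f, Psi f & Xf = (fun w => mean_of P X f - muhat f w)%R]
        delta <= (C * expR (M * delta ^- 2))%:E)%E) ->
  (* (ii) *)
  (let a := Num.min (n%:R ^+ 2 * eps / C2) (n%:R / 4) in
   Num.max (Num.sqrt M * ln (n%:R / a)
              + (if 1 < C then Num.sqrt (ln C) * (n%:R - a) else 0))
           (Num.sqrt n%:R)
   <= n%:R `^ (3 / 2) * eps ^+ 2 / C1) ->
  (outer_prob P
     [set w | ((n%:R ^+ 2 * eps)%:E
               <= ereal_sup [set (`|mean_of P X f - muhat f w|)%:E | f in Psi])%E]
   <= (C3 * expR (- (n%:R * eps ^+ 2) / C4))%:E)%E].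

Proof.
move=> s0.
pose s := 1 + sigma2.
have s1 : 1 <= s by rewrite /s lerDl ltW.
have s0' : 0 < s by apply: lt_le_trans ltr01 s1.
pose c : R := ln 4.
have c0 : 0 < c by apply: ln_gt0; rewrite (ltr_nat R 1 4).
pose C1 := 4 * s * (1 + c^-1).
have C1c : 4 * s <= C1 * c.
  rewrite /C1 -mulrA; apply: ler_peMr; first by rewrite mulr_ge0 // ltW.
  by rewrite mulrDl mul1r mulVf ?gt_eqF // lerDr ltW.
have C1ge : 4 * s <= C1.
  rewrite /C1; apply: ler_peMr; first by rewrite mulr_ge0 // ltW.
  by rewrite lerDl invr_ge0 ltW.
have C1p : 0 < C1 by apply: lt_le_trans C1ge; rewrite mulr_gt0.
exists C1, 1, 8, (4 * s); split => //; first by rewrite mulr_gt0.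
clearbody C1.
move=> d T P n Xs X phi alpha Psi muhat eps C M n0 _ _ _ _ _ _ _ _ _ _ _ _ muhatm dev _ /andP[eps0 eps1] C0 M0 brk hii.
move: hii => /=.
set N : R := n%:R.
set a := Num.min _ _.
move=> hii.

have N1 : 1 <= N by rewrite /N ler1n.
have N0 : 0 < N by apply: lt_le_trans ltr01 N1.
have a0 : 0 < a by rewrite /a lt_min divr_gt0 // ?mulr_gt0 // exprn_gt0.
have a4 : a <= N / 4 by rewrite /a ge_min lexx orbT.
have Na : 4 <= N / a by rewrite ler_pdivlMr // mulrC -ler_pdivlMr.
have lnNa : c <= ln (N / a).
  by rewrite /c ler_ln ?posrE ?divr_gt0 //.
pose r := N `^ (3 / 2).
have r0 : 0 <= r by apply: powR_ge0.
have rr : r ^+ 2 = N ^+ 3.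
  have -> : r = N * Num.sqrt N.
    rewrite /r (_ : 3 / 2 = 1 + 2^-1); last by field.
    rewrite powRD; last by rewrite gt_eqF // implybT.
    by rewrite powRr1 ?ltW // powR12_sqrt ?ltW.
  by rewrite exprMn sqr_sqrtr ?ltW // -exprSr.
move: hii; rewrite ge_max => /andP[hii _].
have T0 : 0 <= (if 1 < C then Num.sqrt (ln C) * (N - a) else 0).
  case: ifP => // _; rewrite mulr_ge0 ?sqrtr_ge0 // subr_ge0.
  apply: le_trans a4 _; rewrite ler_pdivrMr // ler_peMr ?ltW //; lra.
have lnNa0 : 0 <= ln (N / a) by apply: le_trans lnNa; apply: ltW.
have hM1 : Num.sqrt M * c <= r * eps ^+ 2 / C1.
  apply: le_trans hii; apply: (@le_trans _ _ (Num.sqrt M * ln (N / a))).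
    by apply: ler_wpM2l => //; apply: sqrtr_ge0.
  by rewrite lerDl.
have hM : 16 * s * M <= N ^+ 3 * eps ^+ 2.
  have sM := sqrtr_ge0 M.
  have e2 : eps ^+ 2 <= 1 by rewrite expr_le1 ?ltW.
  have e20 : 0 <= eps ^+ 2 by rewrite sqr_ge0.
  move: hM1; rewrite ler_pdivlMr // => hM1.
  have h2 : (Num.sqrt M * (c * C1)) ^+ 2 <= (r * eps ^+ 2) ^+ 2.
    have u0 : 0 <= Num.sqrt M * (c * C1) by rewrite mulr_ge0 // mulr_ge0 // ltW.
    move: hM1 u0; rewrite -mulrA; move: (Num.sqrt M * (c * C1)) (r * eps ^+ 2) => u v huv hu.
    nra.
  rewrite !exprMn (sqr_sqrtr (ltW M0)) rr in h2.
  have h3 : 16 * s <= c ^+ 2 * C1 ^+ 2.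
    have : 4 * s <= c * C1 by rewrite [c * _]mulrC.
    move=> h; rewrite -exprMn; nra.
  have h4 : eps ^+ 2 ^+ 2 <= eps ^+ 2 by nra.
  have N30 : 0 <= N ^+ 3 by rewrite exprn_ge0 ?ltW.
  have h5 : 16 * s * M <= c ^+ 2 * C1 ^+ 2 * M by rewrite ler_wpM2r // ltW.
  have h6 : N ^+ 3 * (eps ^+ 2 * eps ^+ 2) <= N ^+ 3 * eps ^+ 2.
    by rewrite ler_wpM2l // -expr2.
  lra.
have e2 : eps ^+ 2 <= 1 by rewrite expr_le1 ?ltW.
have e20 : 0 <= eps ^+ 2 by rewrite sqr_ge0.
pose Cm := Num.max 1 C.
have Cm1 : 1 <= Cm by rewrite /Cm le_max lexx.
have CCm : C <= Cm by rewrite /Cm le_max lexx orbT.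
have hC : 9 * s * ln Cm <= N * eps ^+ 2.
  rewrite /Cm; case: (ltrP 1 C) T0 hii => C1lt; last first.
    by move=> _ _; rewrite ln1 mulr0; apply: mulr_ge0 => //; apply: ltW.
  move=> T0 hii.
  have l0 : 0 <= ln C by rewrite ltW // ln_gt0.
  have hq : Num.sqrt (ln C) * (N - a) <= r * eps ^+ 2 / C1.
    apply: le_trans hii; rewrite lerDr mulr_ge0 //; exact: sqrtr_ge0.
  move: hq; rewrite ler_pdivlMr // => hq.
  have d0 : 3 * N / 4 <= N - a.
    rewrite lerBrDr; apply: le_trans (lerD (lexx _) a4) _; lra.
  have q0 := sqrtr_ge0 (ln C).
  have hsq : ln C * (N - a) ^+ 2 * C1 ^+ 2 <= N ^+ 3 * (eps ^+ 2 * eps ^+ 2).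
    rewrite -(sqr_sqrtr l0) -rr -!exprMn.
    have u0 : 0 <= Num.sqrt (ln C) * (N - a) * C1.
      have : 0 <= N - a by lra.
      by move=> h; apply: mulr_ge0; [apply: mulr_ge0 | apply: ltW].
    move: hq u0; move: (Num.sqrt (ln C) * (N - a) * C1) (r * eps ^+ 2) => u v huv hu.
    nra.
  have C1s : 16 * s <= C1 ^+ 2 by nra.
  have dd : 9 * N ^+ 2 <= 16 * (N - a) ^+ 2 by nra.
  have h1 : 9 * s * ln C * N ^+ 2 <= ln C * (N - a) ^+ 2 * C1 ^+ 2.
    have g1 : 9 * N ^+ 2 * (16 * s) <= 16 * (N - a) ^+ 2 * C1 ^+ 2.
      apply: ler_pM => //; first by rewrite mulr_ge0 // sqr_ge0.
      by rewrite mulr_ge0 ?ltW.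
    have := ler_wpM2l l0 g1; lra.
  have h6 : N ^+ 3 * (eps ^+ 2 * eps ^+ 2) <= N ^+ 3 * eps ^+ 2.
    apply: ler_wpM2l; [by rewrite exprn_ge0 // ltW | nra].
  have N20 : 0 < N ^+ 2 by rewrite exprn_gt0.
  rewrite -(ler_pM2r N20) (_ : N * eps ^+ 2 * N ^+ 2 = N ^+ 3 * eps ^+ 2); last by ring.
  lra.
set xx := N ^+ 2 * eps.
have xx0 : 0 < xx by rewrite mulr_gt0 // exprn_gt0.
pose E0 := expR (- (N * xx ^+ 2) / (2 * (sigma2 + xx ^+ 2))).
have E00 : 0 <= E0 by apply: ltW; apply: expR_gt0.
have hN : 0 < N <= N by rewrite N0 lexx.
have hlt : ((C * expR (M / N ^+ 2))%:E < (C * expR (M / N ^+ 2) + 1)%:E)%E.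
  by rewrite lte_fin ltrDl.
have /ereal_inf_lt[_ [m [L [U [hLU hcov]]]] <-] := le_lt_trans (brk N hN) hlt.
rewrite lte_fin => hm.
have hA : forall V, [set Xf | exists2 f, Psi f & Xf = (fun w : T => (mean_of P X f - muhat f w)%R)] V ->
    measurable [set w | (xx <= `|V w|)%R] /\ (P [set w | (xx <= `|V w|)%R] <= (2 * E0)%:E)%E.
  move=> V [f pf ->]; split; last exact: dev f pf xx xx0.
  have mg : measurable_fun setT (fun w => `|mean_of P X f - muhat f w|).
    have mB : measurable_fun setT (fun w => mean_of P X f - muhat f w).
      by apply: measurable_funB => //; exact: muhatm.
    by apply: measurableT_comp mB; apply: normr_measurable.
  suff -> : [set w | (xx <= `|mean_of P X f - muhat f w|)%R] =
      setT `&` ((fun w => `|mean_of P X f - muhat f w|) @^-1` `[xx, +oo[).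
    exact: (mg measurableT _ (measurable_itv _)).
  by apply/seteqP; split => w /=; rewrite in_itv /= andbT // => -[_].
pose F j := [set w | (xx <= `|L j w|)%R] `|` [set w | (xx <= `|U j w|)%R].
have hF : forall j, (j < m)%N -> measurable (F j) /\ (P (F j) <= (4 * E0)%:E)%E.
  move=> j jm; have [hl hu _] := hLU j jm.
  have [ml pl] := hA _ hl; have [mu pu] := hA _ hu.
  split; first exact: measurableU.
  apply: le_trans (measureU2 _ ml mu) _.
  by rewrite (_ : 4 * E0 = 2 * E0 + 2 * E0) ?EFinD ?leeD //; ring.
have [mB pB] := @bigU_bound _ _ _ P F _ _ hF.
apply: (@le_trans _ _ (P (\big[setU/set0]_(0 <= j < m) F j))).
  rewrite /outer_prob; apply: ereal_inf_lbound; exists (\big[setU/set0]_(0 <= j < m) F j) => //.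
  split => // w /= hw.
  pose G := maxupto (fun j => Num.max `|L j w| `|U j w|) m.
  have hG : (ereal_sup [set `|mean_of P X f - muhat f w|%:E | f in Psi] <= G%:E)%E.
    apply: ge_ereal_sup => _ [f pf <-]; rewrite lee_fin.
    have [j jm /(_ w) /andP[hl hu]] := hcov _ (ex_intro2 _ _ f pf erefl).
    apply: (le_trans _ (@le_bigmax_nat R (fun j => Num.max `|L j w| `|U j w|) j m jm)) => /=; rewrite ler_norml.
    have := ler_norml (L j w) `|L j w|; rewrite lexx => /esym/andP[h1 _].
    have h2 := ler_norm (U j w).
    have h3 : `|L j w| <= Num.max `|L j w| `|U j w| by rewrite le_max lexx.
    have h4 : `|U j w| <= Num.max `|L j w| `|U j w| by rewrite le_max lexx orbT.
    move: hl hu => /= hl hu.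
    apply/andP; split; lra.
  have xxG : xx <= G by rewrite -lee_fin (le_trans hw hG).
  have [j jm] := @bigmax_ex R _ _ _ xx0 xxG.
  rewrite le_max => /orP h.
  by apply: (@in_bigU _ F j m w jm); case: h => h; [left|right].
apply: le_trans pB _; rewrite lee_fin.
pose t := M / N ^+ 2.
have N20 : 0 < N ^+ 2 by rewrite exprn_gt0.
have t0 : 0 <= t by rewrite divr_ge0 // ltW.
have ht : 16 * s * t <= N * eps ^+ 2.
  rewrite /t mulrA ler_pdivrMr // (_ : N * eps ^+ 2 * N ^+ 2 = N ^+ 3 * eps ^+ 2) //; ring.
have e1 : 1 <= expR t by apply: le_trans (expR_ge1Dx t); rewrite lerDl.
have et0 : 0 < expR t by apply: expR_gt0.
have hK : C * expR t + 1 <= 2 * Cm * expR t.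
  have h1 : C * expR t <= Cm * expR t by apply: ler_wpM2r => //; apply: ltW.
  have h2 : 1 <= Cm * expR t by nra.
  lra.
pose q := N * eps ^+ 2.
pose v := q / s.
have hv : q = v * s by rewrite /v divfK // gt_eqF.
have hE0 : E0 <= expR (- v / 2).
  rewrite /E0 ler_expR !mulNr lerN2 ler_pdivrMr; last by lra.
  rewrite mulrAC ler_pdivlMr; last first.
    by have := sqr_ge0 xx; lra.
  have N21 : 1 <= N ^+ 2 by nra.
  have xe : eps <= xx by rewrite /xx; nra.
  have xe2 : eps ^+ 2 <= xx ^+ 2 by nra.
  have g1 : 0 <= N * sigma2 * (xx ^+ 2 - eps ^+ 2).
    by apply: mulr_ge0; [apply: mulr_ge0; apply: ltW | lra].
  have g2 : 0 <= N * xx ^+ 2 * (1 - eps ^+ 2).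
    by apply: mulr_ge0; [apply: mulr_ge0; [apply: ltW | apply: sqr_ge0] | lra].
  have : q = v * s by [].
  rewrite /q /s => hq.
  have s1p : 0 < 1 + sigma2 by lra.
  nra.
have hCm : Cm = expR (ln Cm) by rewrite lnK // posrE (lt_le_trans ltr01 Cm1).
have hexp : ln Cm + t + (- v / 2) <= - v / 4.
  have a1 : ln Cm * 9 <= v.
    by rewrite -(ler_pM2r s0') -hv /q; move: hC; rewrite -/s; lra.
  have a2 : t * 16 <= v.
    by rewrite -(ler_pM2r s0') -hv /q; move: ht; rewrite -/s; lra.
  lra.
have hm' : m%:R <= 2 * Cm * expR t by apply: le_trans (ltW hm) hK.
apply: (@le_trans _ _ (2 * Cm * expR t * (4 * E0))).
  by apply: ler_wpM2r => //; rewrite mulr_ge0.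
rewrite (_ : 2 * Cm * expR t * (4 * E0) = 8 * (Cm * expR t * E0)); last by ring.
apply: ler_wpM2l => //.
apply: (@le_trans _ _ (Cm * expR t * expR (- v / 2))).
  by apply: ler_wpM2l => //; rewrite mulr_ge0 // ltW // (lt_le_trans ltr01 Cm1).
rewrite {1}hCm -!expRD ler_expR.
rewrite (_ : - (N * eps ^+ 2) / (4 * s) = - v / 4) //.
rewrite /v /q; field; lra.
Qed.
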